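(* Let $A\in\mathbb{R}^{n\times n}$, $B=I$, $m,c_0\in\mathbb{R}^n$, $r>0$, $r_0>0$. Let $p_1,\dots,p_N$ be the generating unit vectors of a $\tfrac{\sqrt3}{2}$-SVP, with maximum alignment $\eta=\max_{i\ne j}\langle p_i,p_j\rangle$, and set $D=\max_{1\le k\le N}\|A^{k+1}-I\|_2$. Suppose \[ r_0\le\frac{r(1-\eta)}{D(3-\eta)} \] and $x_0\in\mathcal{B}(m,r)\cap\mathcal{B}(c_0,r_0)$. Let $u_0\in\mathbb{R}^n$ be arbitrary and define recursively, for $i=1,\dots,N$, \[ u_i=\big(r-\|A^{i+1}-I\|_2\,r_0\big)p_i-(A^{i+1}-I)c_0-\sum_{j=0}^{i-1}A^{i-j}u_j , \] and let $x_{k+1}=Ax_k+u_k$. Then there exists $i\in\{1,\dots,N\}$ with $x_{i+1}\in\mathcal{B}(m,r)$.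
   Context: $\|\cdot\|_2$ denotes the Euclidean norm and the induced operator norm; $\mathcal{B}(x,r)$ is the closed Euclidean ball; $\mathbb{S}^{n-1}$ the unit sphere. A $\tfrac{\sqrt3}{2}$-SVP is generated by unit vectors $p_1,\dots,p_N\in\mathbb{S}^{n-1}$ such that the open caps $C(p_i,\tfrac{\sqrt3}{2})=\{w\in\mathbb{S}^{n-1}:\langle p_i,w\rangle>\tfrac{\sqrt3}{2}\}$ cover $\mathbb{S}^{n-1}$, with $N$ the smallest integer for which such a covering exists (necessarily $N\ge2$). The corresponding spherical Voronoi partition of a sphere $\partial\mathcal{B}(c,\rho)$ has cells $R_i=\{x:\|x-c\|=\rho,\ \langle x-c,p_i\rangle\ge\langle x-c,p_j\rangle\ \forall j\ne i\}$. *)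

(* Defs.v *)
From HB Require Import structures.
From mathcomp Require Import all_boot all_order all_algebra.
From mathcomp Require Import boolp classical_sets reals.
Set Implicit Arguments. Unset Strict Implicit. Unset Printing Implicit Defensive.
Import Order.TTheory GRing.Theory Num.Theory.
Local Open Scope ring_scope.

Section Defs.
Variable R : realType.

Definition enorm (n : nat) (x : 'cV[R]_n) : R := Num.sqrt (\sum_(i < n) x i 0 ^+ 2).

Definition dot (n : nat) (x y : 'cV[R]_n) : R := \sum_(i < n) x i 0 * y i 0.

Definition opnorm (n : nat) (A : 'M[R]_n) : R :=
  sup [set enorm (A *m x) | x in [set x : 'cV[R]_n | enorm x <= 1]]%classic.

Definition cball (n : nat) (c : 'cV[R]_n) (rho : R) : set 'cV[R]_n :=
  [set x | enorm (x - c) <= rho]%classic.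

(* p_1, ..., p_N are unit vectors whose open caps C(p_i, sqrt3/2) cover S^{n-1} *)
Definition caps_cover (n N : nat) (p : nat -> 'cV[R]_n) : Prop :=
  (forall i, (1 <= i <= N)%N -> enorm (p i) = 1) /\
  (forall w : 'cV[R]_n, enorm w = 1 ->
     exists i, (1 <= i <= N)%N /\ Num.sqrt 3 / 2 < dot (p i) w).

(* p_1, ..., p_N generate a sqrt3/2-SVP: a covering with minimal N *)
Definition is_SVP (n N : nat) (p : nat -> 'cV[R]_n) : Prop :=
  caps_cover N p /\ (forall (M : nat) (q : nat -> 'cV[R]_n), caps_cover M q -> (N <= M)%N).

Definition max_alignment (n N : nat) (p : nat -> 'cV[R]_n) : R :=
  sup [set d : R | exists i j : nat,
         [/\ (1 <= i <= N)%N, (1 <= j <= N)%N, i <> j & d = dot (p i) (p j)]]%classic.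

Definition Dconst (n N : nat) (A : 'M[R]_n) : R :=
  sup [set opnorm (A ^+ k.+1 - 1%:M) | k in [set k : nat | (1 <= k <= N)%N]]%classic.

End Defs.

(* Main.v *)
Require Import Defs.
From HB Require Import structures.
From mathcomp Require Import all_boot all_order all_algebra.
From mathcomp Require Import boolp classical_sets reals.
From mathcomp Require Import ring lra.
Import Order.TTheory GRing.Theory Num.Theory.
Set Implicit Arguments. Unset Strict Implicit. Unset Printing Implicit Defensive.
Local Open Scope ring_scope.

Lemma dotC (R : realType) n (a b : 'cV[R]_n) : dot a b = dot b a.
Proof. by apply: eq_bigr => i _; rewrite mulrC. Qed.
Lemma dotDl (R : realType) n (a b c : 'cV[R]_n) : dot (a + b) c = dot a c + dot b c.
Proof. rewrite /dot -big_split; apply: eq_bigr => i _; by rewrite mxE mulrDl. Qed.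
Lemma dotBl (R : realType) n (a b c : 'cV[R]_n) : dot (a - b) c = dot a c - dot b c.
Proof. rewrite /dot -sumrB; apply: eq_bigr => i _; by rewrite !mxE mulrBl. Qed.
Lemma dotZl (R : realType) n k (a c : 'cV[R]_n) : dot (k *: a) c = k * dot a c.
Proof. rewrite /dot mulr_sumr; apply: eq_bigr => i _; by rewrite mxE mulrA. Qed.
Lemma dotDr (R : realType) n (a b c : 'cV[R]_n) : dot c (a + b) = dot c a + dot c b.
Proof. by rewrite dotC dotDl !(dotC c). Qed.
Lemma dotBr (R : realType) n (a b c : 'cV[R]_n) : dot c (a - b) = dot c a - dot c b.
Proof. by rewrite dotC dotBl !(dotC c). Qed.
Lemma dotZr (R : realType) n k (a c : 'cV[R]_n) : dot c (k *: a) = k * dot c a.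
Proof. by rewrite dotC dotZl dotC. Qed.
Lemma dotNl (R : realType) n (a c : 'cV[R]_n) : dot (- a) c = - dot a c.
Proof. by rewrite -scaleN1r dotZl mulN1r. Qed.
Lemma dotNr (R : realType) n (a c : 'cV[R]_n) : dot c (- a) = - dot c a.
Proof. by rewrite dotC dotNl dotC. Qed.
Lemma dot0l (R : realType) n (c : 'cV[R]_n) : dot 0 c = 0.
Proof. by rewrite -(scale0r (0:'cV[R]_n)) dotZl mul0r. Qed.
Lemma dot_ge0 (R : realType) n (a : 'cV[R]_n) : 0 <= dot a a.
Proof. by apply: sumr_ge0 => i _; rewrite -expr2 sqr_ge0. Qed.
Lemma dot0 (R : realType) n (a : 'cV[R]_n) : dot a a = 0 -> a = 0.
Proof.
move=> h; apply/matrixP => i j; rewrite ord1 mxE.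
have H2 := @psumr_eq0P R _ xpredT (fun k => a k 0 * a k 0).
have /eqP := H2 (fun k _ => ltac:(by rewrite -expr2 sqr_ge0)) h i isT.
by rewrite mulf_eq0 orbb => /eqP.
Qed.

Lemma enormE (R : realType) n (a : 'cV[R]_n) : enorm a = Num.sqrt (dot a a).
Proof. by rewrite /enorm /dot; congr Num.sqrt; apply: eq_bigr => i _; rewrite expr2. Qed.
Lemma enorm_ge0 (R : realType) n (a : 'cV[R]_n) : 0 <= enorm a.
Proof. by rewrite enormE sqrtr_ge0. Qed.
Lemma enorm_sq (R : realType) n (a : 'cV[R]_n) : enorm a ^+ 2 = dot a a.
Proof. by rewrite enormE sqr_sqrtr // dot_ge0. Qed.

Lemma CS2 (R : realType) n (a b : 'cV[R]_n) : dot a b ^+ 2 <= dot a a * dot b b.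
Proof.
set al := dot a a; set be := dot b b; set ga := dot a b.
have hb : 0 <= be by apply: dot_ge0.
have := dot_ge0 (be *: a - ga *: b).
rewrite !(dotBl, dotBr, dotZl, dotZr) (dotC b a) -/al -/be -/ga => H.
have H' : 0 <= be * (al * be - ga ^+ 2).
  by move: H; congr (_ <= _); ring.
case: (ltrP 0 be) => hb'.
  by rewrite -subr_ge0; rewrite pmulr_rge0 in H'.
have be0 : be = 0 by apply/eqP; rewrite eq_le hb' hb.
have : b = 0 by apply: dot0.
move=> b0; rewrite be0 /ga b0 /dot big1; first by rewrite expr2 mul0r mulr0.
by move=> i _; rewrite mxE mulr0.
Qed.

Lemma CS (R : realType) n (a b : 'cV[R]_n) : dot a b <= enorm a * enorm b.
Proof.
rewrite !enormE -sqrtrM ?dot_ge0 //.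
apply: (le_trans (ler_norm _)); rewrite -sqrtr_sqr ler_sqrt ?CS2 //.
by rewrite mulr_ge0 ?dot_ge0.
Qed.

Lemma enormD (R : realType) n (a b : 'cV[R]_n) : enorm (a + b) <= enorm a + enorm b.
Proof.
rewrite [enorm (a+b)]enormE -[enorm a + enorm b]ger0_norm ?addr_ge0 ?enorm_ge0 //.
rewrite -sqrtr_sqr ler_sqrt ?sqr_ge0 //.
rewrite !(dotDl, dotDr) sqrrD -!enorm_sq (dotC b a).
have := CS a b; lra.
Qed.

Lemma enormZ (R : realType) n k (a : 'cV[R]_n) : enorm (k *: a) = `|k| * enorm a.
Proof. rewrite !enormE dotZl dotZr mulrA sqrtrM; last by rewrite -expr2 sqr_ge0.
by rewrite -expr2 sqrtr_sqr. Qed.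

Lemma enormN (R : realType) n (a : 'cV[R]_n) : enorm (- a) = enorm a.
Proof. by rewrite -scaleN1r enormZ normrN normr1 mul1r. Qed.

Lemma enorm0 (R : realType) n : enorm (0 : 'cV[R]_n) = 0.
Proof. by rewrite enormE dot0l sqrtr0. Qed.

Lemma enorm_eq0 (R : realType) n (a : 'cV[R]_n) : enorm a = 0 -> a = 0.
Proof. by move=> h; apply: dot0; rewrite -enorm_sq h expr2 mul0r. Qed.

Lemma opnorm_ub (R : realType) n (M : 'M[R]_n) :
  has_ubound [set enorm (M *m x) | x in [set x : 'cV[R]_n | enorm x <= 1]]%classic.
Proof.
exists (Num.sqrt (\sum_(i < n) dot (row i M)^T (row i M)^T)).
move=> z [x /= hx <-]; rewrite enormE ler_sqrt; last first.
  by apply: sumr_ge0 => i _; apply: dot_ge0.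
rewrite {1}/dot; apply: ler_sum => i _.
have -> : (M *m x) i 0 = dot (row i M)^T x.
  by rewrite mxE /dot; apply: eq_bigr => j _; rewrite !mxE.
rewrite -expr2; apply: (le_trans (CS2 _ _)).
rewrite -[leRHS]mulr1; apply: ler_wpM2l; first exact: dot_ge0.
rewrite -enorm_sq -[1](expr1n _ 2); by rewrite ler_sqr ?nnegrE ?enorm_ge0.
Qed.

Lemma opnorm_bound (R : realType) n (M : 'M[R]_n) e :
  enorm (M *m e) <= opnorm M * enorm e.
Proof.
have [e0|] := eqVneq (enorm e) 0.
  by rewrite e0 (enorm_eq0 e0) mulmx0 enorm0 mulr0.
move=> ne; have ep : 0 < enorm e by rewrite lt_def ne enorm_ge0.
have h : enorm (M *m ((enorm e)^-1 *: e)) <= opnorm M.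
  apply: (ub_le_sup (opnorm_ub M)); exists ((enorm e)^-1 *: e) => //=.
  by rewrite enormZ ger0_norm ?invr_ge0 ?enorm_ge0 // mulVf.
move: h; rewrite -scalemxAr enormZ ger0_norm ?invr_ge0 ?enorm_ge0 //.
by rewrite mulrC -ler_pdivlMr ?invr_gt0 // invrK.
Qed.

Lemma traj (R : realType) n (A : 'M[R]_n) (u x : nat -> 'cV[R]_n) :
  (forall k, x k.+1 = A *m x k + u k) ->
  forall k, x k.+1 = A ^+ k.+1 *m x 0%N + \sum_(j < k.+1) A ^+ (k - j) *m u j.
Proof.
move=> hx; elim=> [|k IH].
  by rewrite hx big_ord1 expr1 subnn expr0 mul1mx.
rewrite hx IH mulmxDr mulmxA mulmx_sumr [in RHS]big_ord_recr /= subnn expr0 mul1mx.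
have -> : A *m A ^+ k.+1 = A ^+ k.+2 by rewrite mulmxE -exprS.
rewrite -addrA; congr (_ + (_ + _)); apply: eq_bigr => j _; rewrite mulmxA.
have -> : A *m A ^+ (k - j) = A ^+ (k.+1 - j) by rewrite mulmxE -exprS subSn // -ltnS.
by [].
Qed.

Lemma sqrt3_bounds (R : realType) : 8/5 < Num.sqrt 3 :> R.
Proof.
have h0 : 0 <= Num.sqrt 3 :> R by apply: sqrtr_ge0.
have h3 : Num.sqrt 3 ^+ 2 = 3 :> R by rewrite sqr_sqrtr.
rewrite expr2 in h3; nra.
Qed.

Lemma align (R : realType) n N (p : nat -> 'cV[R]_n) :
  caps_cover N p -> forall i, (1 <= i <= N)%N -> forall w, enorm w = 1 ->
  0 < dot (p i) w -> dot (p i) w < 1 ->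
  exists j, [/\ (1 <= j <= N)%N, j <> i & 0 < dot (p i) (p j)].
Proof.
move=> [hu hc] i hi w hw c0 c1.
set c := dot (p i) w.
have pii : dot (p i) (p i) = 1 by rewrite -enorm_sq hu // expr1n.
have ww : dot w w = 1 by rewrite -enorm_sq hw expr1n.
set y := w - c *: p i.
have yy : dot y y = 1 - c ^+ 2.
  rewrite /y !(dotBl, dotBr, dotZl, dotZr) (dotC w (p i)) -/c pii ww; ring.
have py : dot (p i) y = 0.
  by rewrite /y !(dotBr, dotZr) -/c pii mulr1 subrr.
have cb : c ^+ 2 < 1.
  have c0' : 0 < c := c0; have c1' : c < 1 := c1.
  rewrite expr2; nra.
set t := Num.sqrt (1 - c ^+ 2).
have tp : 0 < t by rewrite sqrtr_gt0 subr_gt0.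
have tt : t * t = 1 - c ^+ 2 by rewrite -expr2 sqr_sqrtr // subr_ge0 ltW.
set q := t^-1 *: y.
have qq : dot q q = 1.
  by rewrite /q dotZl dotZr yy -tt mulrA -invfM mulVf // mulf_neq0 // gt_eqF.
have pq : dot (p i) q = 0 by rewrite /q dotZr py mulr0.
clearbody q.
set z := (4/5 : R) *: p i + (3/5 : R) *: q.
have zz : dot z z = 1.
  rewrite /z !(dotDl, dotDr, dotZl, dotZr) (dotC q (p i)) pq pii qq; by field.
have pz : dot (p i) z = 4/5.
  rewrite /z !(dotDr, dotZr) pq pii; by field.
have hz1 : enorm z = 1 by rewrite enormE zz sqrtr1.
have [j [hj hjz]] := hc z hz1.
clearbody z.
have s3 := sqrt3_bounds R.
exists j; split => //.
  by move=> ji; move: hjz; rewrite ji pz; lra.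
have pjj : dot (p j) (p j) = 1 by rewrite -enorm_sq hu // expr1n.
have := dot_ge0 (p i + (p j - z)).
rewrite !dotDl !dotDr !dotNl !dotNr (dotC z (p j)) (dotC (p j) (p i)) (dotC z (p i)) pii pjj zz pz.


lra.
Qed.

Lemma eta_ub (R : realType) n N (p : nat -> 'cV[R]_n) :
  (forall i, (1 <= i <= N)%N -> enorm (p i) = 1) ->
  ubound [set d : R | exists i j : nat,
         [/\ (1 <= i <= N)%N, (1 <= j <= N)%N, i <> j & d = dot (p i) (p j)]]%classic 1.
Proof.
move=> hu d [i [j [hi hj _ ->]]].
by have := CS (p i) (p j); rewrite !hu // mulr1.
Qed.

Lemma eta_le1 (R : realType) n N (p : nat -> 'cV[R]_n) :
  (forall i, (1 <= i <= N)%N -> enorm (p i) = 1) -> max_alignment N p <= 1.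
Proof.
move=> hu; rewrite /max_alignment.
set S := (X in sup X).
have [ne|e] := pselect (S !=set0)%classic.
  by apply: ge_sup => //; apply: eta_ub.
have -> : S = set0%classic.
  by apply/eqP; apply/negPn/negP => /set0P.
by rewrite sup0 ler01.
Qed.

Lemma eta_ge (R : realType) n N (p : nat -> 'cV[R]_n) :
  (forall i, (1 <= i <= N)%N -> enorm (p i) = 1) ->
  forall i j, (1 <= i <= N)%N -> (1 <= j <= N)%N -> i <> j ->
  dot (p i) (p j) <= max_alignment N p.
Proof.
move=> hu i j hi hj ij; apply: ub_le_sup; first by exists 1; apply: eta_ub.
by exists i, j.
Qed.

Lemma D_ge (R : realType) n N (A : 'M[R]_n) k : (1 <= k <= N)%N ->
  opnorm (A ^+ k.+1 - 1%:M) <= Dconst N A.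
Proof.
move=> hk; apply: ub_le_sup; last by exists k.
exists (\sum_(l < N.+1) `|opnorm (A ^+ l.+1 - 1%:M)|).
move=> z [l /= hl <-].
have hlN : (l < N.+1)%N by rewrite ltnS; case/andP: hl.
rewrite (bigD1 (Ordinal hlN)) //=.
apply: le_trans (ler_norm _) _; rewrite lerDl.
by apply: sumr_ge0 => ? _.
Qed.

Lemma D_N0 (R : realType) n (A : 'M[R]_n) : Dconst 0 A = 0.
Proof.
rewrite /Dconst; set S := (X in sup X).
have -> : S = set0%classic.
  by apply/seteqP; split => z // [k /= hk _]; move: hk; case: k.
exact: sup0.
Qed.
Set Implicit Arguments.
Lemma grp (V : zmodType) (Ax x0 Q sp m : V) :
  Ax + (sp - Q) - m = (x0 - m + sp) + ((Ax - x0) - Q).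
Proof.
rewrite !addrA [x0 - m + sp + Ax]addrC !addrA.
rewrite (addrAC _ sp (- x0)) (addrAC _ (- m) (- x0)) addrK.
by rewrite (addrAC _ (- m) sp) (addrAC _ (- m) (- Q)).
Qed.

Lemma eta_gem1 (R : realType) n N (p : nat -> 'cV[R]_n) :
  (forall i, (1 <= i <= N)%N -> enorm (p i) = 1) -> -1 <= max_alignment N p.
Proof.
move=> hu; rewrite /max_alignment.
set S := (X in sup X).
have [[d Sd]|e] := pselect (S !=set0)%classic.
  apply: le_trans (ub_le_sup _ Sd); last by exists 1; apply: eta_ub.
  case: Sd => i [j [hi hj _ ->]].
  by have := CS (p i) (- p j); rewrite enormN !hu // mulr1 dotNr lerNl.
have -> : S = set0%classic.
  by apply/eqP; apply/negPn/negP => /set0P.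
by rewrite sup0 lerN10.
Qed.

Lemma opnorm_ge0 (R : realType) n (M : 'M[R]_n) : 0 <= opnorm M.
Proof.
apply: (ub_le_sup (opnorm_ub M)); exists 0; first by rewrite /= enorm0.
by rewrite mulmx0 enorm0.
Qed.

Lemma step (R : realType) n (v q : 'cV[R]_n) s : 0 <= s -> dot q q = 1 ->
  dot v v + 2 * s * dot q v <= 0 -> enorm (v + s *: q) <= s.
Proof.
move=> s0 qq h.
rewrite -[leRHS]ger0_norm // -sqrtr_sqr enormE ler_sqrt ?sqr_ge0 //.
rewrite !(dotDl, dotDr, dotZl, dotZr) (dotC v q) qq; nra.
Qed.

Unset Implicit Arguments.
Theorem lemma5p2 (R : realType) (n N : nat) (A : 'M[R]_n)
  (m c0 x0 : 'cV[R]_n) (r r0 : R) (p : nat -> 'cV[R]_n)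
  (u x : nat -> 'cV[R]_n) :
  0 < r -> 0 < r0 ->
  is_SVP N p ->
  r0 <= r * (1 - max_alignment N p) / (Dconst N A * (3 - max_alignment N p)) ->
  cball m r x0 -> cball c0 r0 x0 ->
  (forall i, (1 <= i <= N)%N ->
     u i = (r - opnorm (A ^+ i.+1 - 1%:M) * r0) *: p i
           - (A ^+ i.+1 - 1%:M) *m c0
           - \sum_(j < i) (A ^+ (i - j) *m u j)) ->
  x 0%N = x0 ->
  (forall k, x k.+1 = A *m x k + u k) ->
  exists i, (1 <= i <= N)%N /\ cball m r (x i.+1).
Proof.
move=> hr hr0 [hcov _] hle hm hc hu hx0 hx.
have hpu := hcov.1.
have eta1 := eta_le1 hpu.
have etam := eta_gem1 hpu.
have hDge := @D_ge R n N A.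
have hN : (0 < N)%N.
  rewrite lt0n; apply/eqP => N0; move: hle.
  by rewrite N0 D_N0 mul0r invr0 mulr0 leNgt hr0.
set eta := max_alignment N p in hle eta1 etam.
set D := Dconst N A in hle hDge.
have e3 : 0 < 3 - eta by lra.
have Dpos : 0 < D.
  rewrite ltNge; apply/negP => hD.
  have : r * (1 - eta) / (D * (3 - eta)) <= 0.
    apply: mulr_ge0_le0; first by apply: mulr_ge0; lra.
    rewrite invr_le0; nra.
  lra.
have key : 2 * r <= (r - D * r0) * (3 - eta).
  move: hle; rewrite ler_pdivlMr ?mulr_gt0 // => h; nra.
have hsall : forall i, (1 <= i <= N)%N ->
    2 * r <= (r - opnorm (A ^+ i.+1 - 1%:M) * r0) * (3 - eta).
  move=> i hi; set M := A ^+ i.+1 - 1%:M.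
  have := hDge i hi; rewrite -/M => hMD.
  have h0 : opnorm M * r0 <= D * r0 by rewrite ler_wpM2r // ltW.
  nra.
have fin : forall i, (1 <= i <= N)%N ->
    dot (x0 - m) (x0 - m) + 2 * (r - opnorm (A ^+ i.+1 - 1%:M) * r0) * dot (p i) (x0 - m) <= 0 ->
    cball m r (x i.+1).
  move=> i hi hcond.
  set M := A ^+ i.+1 - 1%:M; set s := r - opnorm M * r0.
  have hs := hsall i hi; rewrite -/M -/s in hs.
  have s0 : 0 <= s by nra.
  have ex : x i.+1 - m = (x0 - m + s *: p i) + M *m (x0 - c0).
    rewrite (traj hx) hx0 big_ord_recr /= subnn expr0 mul1mx hu // -/M -/s.
    set S := \sum_(j < i) _.
    rewrite (addrC S) subrK.
    by rewrite mulmxBr /M !mulmxBl !mul1mx (grp _ x0).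
  rewrite /cball /= ex.
  apply: le_trans (enormD _ _) _.
  have h1 : enorm (M *m (x0 - c0)) <= opnorm M * r0.
    apply: le_trans (opnorm_bound _ _) _.
    by apply: ler_wpM2l; [apply: opnorm_ge0 | rewrite /cball /= in hc].
  have h2 : enorm (x0 - m + s *: p i) <= s.
    apply: step => //; first by rewrite -enorm_sq hpu // expr1n.
  rewrite /s in h2; lra.
set v := x0 - m in fin.
have hvr : enorm v <= r by [].
have [v0|vn] := eqVneq (enorm v) 0.
  exists 1%N; split; first by rewrite leqnn hN.
  apply: fin; first by rewrite leqnn hN.
  by rewrite (enorm_eq0 v0) dot0l dotC dot0l mulr0 addr0.
have nup : 0 < enorm v by rewrite lt_def vn enorm_ge0.
set nu := enorm v in hvr nup vn.
set w := (- nu^-1) *: v.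
have hw : enorm w = 1 by rewrite enormZ normrN ger0_norm ?invr_ge0 ?ltW // mulVf.
have hvw : v = (- nu) *: w by rewrite /w scalerA mulrNN mulfV // scale1r.
have [i [hi hci]] := hcov.2 w hw.
exists i; split => //; apply: fin => //.
set c := dot (p i) w in hci.
have s3 := sqrt3_bounds R.
have s32 : 0 < Num.sqrt 3 / 2 :> R by lra.
have c4 : 3 - eta <= 4 * c.
  have [c1|c1] := ltrP c 1.
    have [j [hj ji hpos]] := align hcov hi hw (lt_trans s32 hci) c1.
    have := eta_ge hpu hi hj (nesym ji); rewrite -/eta => he.
    lra.
  lra.
have hs := hsall i hi.
set s := r - _ * r0 in hs *.
have s0 : 0 <= s by nra.
rewrite hvw dotZl dotZr /nu -enorm_sq -/nu hw expr1n mulr1 -/c.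
have h1 : s * (3 - eta) <= s * (4 * c) by rewrite ler_wpM2l.
have h2 : nu <= 2 * s * c by lra.
have h3 : nu * nu <= 2 * s * c * nu by rewrite ler_wpM2r // ltW.
rewrite dotZr -/c mulrNN; nra.
Qed.
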